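(* Let $G$ be a strongly connected directed graph on a finite vertex set (self-loops allowed) and let $\beta$ be a balanced graph function on $G$. Then $\beta$ is the unique balanced graph function in its equivalence class if and only if the graph $G_\beta^w$ is strongly connected for every real $w$.
   Context: A graph function on $G$ assigns a real weight $\beta_{uv}$ to every edge $(u,v)$ of $G$. For a vertex $v$, $\beta_v^{\text{in}}=\max_{u:(u,v)\in G}\beta_{uv}$ and $\beta_v^{\text{out}}=\max_{w:(v,w)\in G}\beta_{vw}$; $\beta$ is balanced if $\beta_v^{\text{in}}=\beta_v^{\text{out}}$ for all $v$. Two graph functions $\alpha,\gamma$ on $G$ are equivalent if $\sum_{\ell=1}^k(\alpha_{v_\ell v_{\ell+1}}-\gamma_{v_\ell v_{\ell+1}})=0$ for every directed cycle $(v_1,\dots,v_k)$ of $G$ (with $v_{k+1}=v_1$). For real $w$, $G_\beta^w$ is the subgraph of $G$ consisting of the edges $(u,v)$ with $\beta_{uv}\ge w$, with isolated vertices removed (a vertex carrying a self-loop is not considered isolated). *)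

(* Defs.v *)
From mathcomp Require Import all_boot all_order all_algebra.
Set Implicit Arguments. Unset Strict Implicit. Unset Printing Implicit Defensive.
Import Order.TTheory GRing.Theory Num.Theory.
Local Open Scope ring_scope.

(* A graph function on e assigns a real weight beta u v
   to every edge; we represent it as a function V -> V -> R of which only the
   values on edges matter. *)

Section GraphFun.
Variables (V : finType) (R : realFieldType).

(* maximum on option R, None standing for the max of the empty family *)
Definition omax (a b : option R) : option R :=
  match a, b with
  | None, _ => b
  | _, None => a
  | Some x, Some y => Some (Num.max x y)
  end.

Definition beta_in (e : rel V) (beta : V -> V -> R) (v : V) : option R :=
  \big[omax/None]_(u | e u v) Some (beta u v).

Definition beta_out (e : rel V) (beta : V -> V -> R) (v : V) : option R :=
  \big[omax/None]_(w | e v w) Some (beta v w).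

Definition balanced (e : rel V) (beta : V -> V -> R) : Prop :=
  forall v, beta_in e beta v = beta_out e beta v.

Definition directed_cycle (e : rel V) (c : seq V) : Prop :=
  [/\ 0 < size c, uniq c & cycle e c]%N.

Definition cycle_sum (f : V -> V -> R) (c : seq V) : R :=
  \sum_(p <- zip c (rot 1 c)) f p.1 p.2.

Definition equivalent (e : rel V) (alpha gamma : V -> V -> R) : Prop :=
  forall c, directed_cycle e c ->
    cycle_sum (fun u v => alpha u v - gamma u v) c = 0.

Definition eq_on_edges (e : rel V) (alpha gamma : V -> V -> R) : Prop :=
  forall u v, e u v -> alpha u v = gamma u v.

Definition thr_edge (e : rel V) (beta : V -> V -> R) (w : R) : rel V :=
  fun u v => e u v && (w <= beta u v).

(* vertices of a graph with isolated vertices removed: those incident to an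
   edge (a vertex with a self-loop is not isolated) *)
Definition nonisolated (e : rel V) (v : V) : bool :=
  [exists u, e u v || e v u].

Definition strongly_connected_on (P : pred V) (e : rel V) : Prop :=
  forall u v, P u -> P v -> connect e u v.

Definition strongly_connected (e : rel V) : Prop :=
  strongly_connected_on predT e.

Definition G_thr_strongly_connected (e : rel V) (beta : V -> V -> R) (w : R)
  : Prop :=
  strongly_connected_on (nonisolated (thr_edge e beta w)) (thr_edge e beta w).

Definition unique_balanced_in_class (e : rel V) (beta : V -> V -> R) : Prop :=
  forall gamma, balanced e gamma -> equivalent e beta gamma ->
    eq_on_edges e gamma beta.

End GraphFun.

(* Main.v *)
Require Import Defs.
From mathcomp Require Import all_boot all_order all_algebra.
From Stdlib Require Import Classical.
From mathcomp Require Import ring lra zify.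
Set Implicit Arguments. Unset Strict Implicit. Unset Printing Implicit Defensive.
Import Order.TTheory GRing.Theory Num.Theory.
Local Open Scope ring_scope.

Section Basics.
Variable R : realFieldType.

Lemma omax_big_spec (I : eqType) (r : seq I) (P : pred I) (F : I -> R) :
  (\big[@omax R/None]_(i <- r | P i) Some (F i) = None /\ forall i, i \in r -> ~~ P i) \/
  (exists m, \big[@omax R/None]_(i <- r | P i) Some (F i) = Some m /\
     (exists i, [/\ i \in r, P i & F i = m]) /\ forall i, i \in r -> P i -> F i <= m).
Proof.
elim: r => [|a r IH]; first by left; rewrite big_nil.
rewrite big_cons; case Pa: (P a).
- right; case: IH => [[-> H]|[m [-> [[i [ir Pi Fi]] Hm]]]].
  + exists (F a); split=> //; split; first by exists a; rewrite inE eqxx.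
    move=> i; rewrite inE => /orP[/eqP->//|ir Pi]; by rewrite (negbTE (H i ir)) in Pi.
  + exists (Num.max (F a) m); split=> //; split.
    * case: (leP (F a) m) => h.
      -- by exists i; rewrite inE ir orbT Pi Fi.
      -- by exists a; rewrite inE eqxx.
    * move=> j; rewrite inE => /orP[/eqP->|jr Pj]; first by rewrite le_max lexx.
      by rewrite le_max (Hm j jr Pj) orbT.
- case: IH => [[-> H]|[m [-> [[i [ir Pi Fi]] Hm]]]].
  + left; split=> // i; rewrite inE => /orP[/eqP->|/H//]; by rewrite Pa.
  + right; exists m; split=> //; split; first by exists i; rewrite inE ir orbT.
    move=> j; rewrite inE => /orP[/eqP->|jr Pj]; first by rewrite Pa.
    exact: Hm.
Qed.

Variable I : finType.
Implicit Types (P Q : pred I) (F G : I -> R).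

Lemma obig_cases P F :
  (\big[@omax R/None]_(i | P i) Some (F i) = None /\ forall i, ~~ P i) \/
  (exists m, \big[@omax R/None]_(i | P i) Some (F i) = Some m /\
     (exists i, P i /\ F i = m) /\ forall i, P i -> F i <= m).
Proof.
case: (omax_big_spec (index_enum I) P F) => [[-> H]|[m [-> [[i [_ Pi Fi]] Hm]]]].
- by left; split=> // i; apply: H; rewrite mem_index_enum.
- right; exists m; split=> //; split; first by exists i.
  by move=> j Pj; apply: Hm; rewrite ?mem_index_enum.
Qed.

Lemma obig_none P F : (forall i, ~~ P i) -> \big[@omax R/None]_(i | P i) Some (F i) = None.
Proof.
move=> H; case: (obig_cases P F) => [[-> _]//|[m [_ [[i [Pi _]] _]]]].
by rewrite (negbTE (H i)) in Pi.
Qed.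

Lemma obig_some P F i m : P i -> F i = m -> (forall j, P j -> F j <= m) ->
  \big[@omax R/None]_(i | P i) Some (F i) = Some m.
Proof.
move=> Pi Fi Hm; case: (obig_cases P F) => [[_ H]|[m' [-> [[j [Pj Fj]] Hm']]]].
  by rewrite (negbTE (H i)) in Pi.
congr Some; apply/eqP; rewrite eq_le -Fj (Hm j Pj) /= -Fi Fj; exact: Hm' i Pi.
Qed.

Lemma obig_eq P Q F G :
  (forall i, P i -> exists j, Q j /\ F i <= G j) ->
  (forall j, Q j -> exists i, P i /\ G j <= F i) ->
  \big[@omax R/None]_(i | P i) Some (F i) = \big[@omax R/None]_(i | Q i) Some (G i).
Proof.
move=> H1 H2.
case: (obig_cases P F) => [[-> HP]|[m [-> [[i [Pi Fi]] Hm]]]];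
case: (obig_cases Q G) => [[-> HQ]|[m' [-> [[j [Qj Gj]] Hm']]]] //.
- by case: (H2 j Qj) => i [Pi _]; rewrite (negbTE (HP i)) in Pi.
- by case: (H1 i Pi) => j [Qj _]; rewrite (negbTE (HQ j)) in Qj.
- congr Some; apply/eqP; rewrite eq_le.
  case: (H1 i Pi) => j' [Qj' le1]; case: (H2 j Qj) => i' [Pi' le2].
  rewrite -Fi -Gj; apply/andP; split.
  + apply: le_trans le1 _; rewrite Gj; exact: (Hm' j' Qj').
  + apply: le_trans le2 _; rewrite Fi; exact: (Hm i' Pi').
Qed.

End Basics.

Lemma obig_eq2 (R : realFieldType) (I J : finType) (P : pred I) (Q : pred J) (F : I -> R) (G : J -> R) :
  (forall i, P i -> exists j, Q j /\ F i <= G j) ->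
  (forall j, Q j -> exists i, P i /\ G j <= F i) ->
  \big[@omax R/None]_(i | P i) Some (F i) = \big[@omax R/None]_(i | Q i) Some (G i).
Proof.
move=> H1 H2.
case: (obig_cases P F) => [[-> HP]|[m [-> [[i [Pi Fi]] Hm]]]];
case: (obig_cases Q G) => [[-> HQ]|[m' [-> [[j [Qj Gj]] Hm']]]] //.
- by case: (H2 j Qj) => i [Pi _]; rewrite (negbTE (HP i)) in Pi.
- by case: (H1 i Pi) => j [Qj _]; rewrite (negbTE (HQ j)) in Qj.
- congr Some; apply/eqP; rewrite eq_le.
  case: (H1 i Pi) => j' [Qj' le1]; case: (H2 j Qj) => i' [Pi' le2].
  rewrite -Fi -Gj; apply/andP; split.
  + apply: le_trans le1 _; rewrite Gj; exact: (Hm' j' Qj').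
  + apply: le_trans le2 _; rewrite Fi; exact: (Hm i' Pi').
Qed.

Section Graph.
Variables (R : realFieldType) (V : finType).
Implicit Types (e F : rel V) (f g beta gamma : V -> V -> R) (p q : V -> R).

Definition shift beta p : V -> V -> R := fun x y => beta x y + p y - p x.

Fixpoint psum f x s : R :=
  if s is y :: s' then f x y + psum f y s' else 0.

Lemma psum_cat f x s1 s2 : psum f x (s1 ++ s2) = psum f x s1 + psum f (last x s1) s2.
Proof. by elim: s1 x => [|y s IH] x /=; rewrite ?add0r // IH addrA. Qed.

Lemma psum_rcons f x s y : psum f x (rcons s y) = psum f x s + f (last x s) y.
Proof. by rewrite -cats1 psum_cat /= addr0. Qed.

Lemma psum_shift f p x s : psum (shift f p) x s = psum f x s + p (last x s) - p x.
Proof.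
elim: s x => [|y s IH] x /=; first by rewrite add0r addrN.
by rewrite IH /shift; ring.
Qed.

Lemma psum_sub f g x s : psum (fun a b => f a b - g a b) x s = psum f x s - psum g x s.
Proof. by elim: s x => [|y s IH] x /=; rewrite ?subr0 // IH; ring. Qed.

Lemma psum_subc f (c : R) x s : psum (fun a b => f a b - c) x s = psum f x s - c * (size s)%:R.
Proof.
elim: s x => [|y s IH] x /=; first by rewrite mulr0 subr0.
by rewrite IH -addn1 natrD; ring.
Qed.

Lemma psum_neg f x s : psum (fun a b => - f a b) x s = - psum f x s.
Proof. by elim: s x => [|y s IH] x /=; rewrite ?oppr0 // IH opprD. Qed.

Lemma psum_zip f x s : psum f x s = \sum_(pr <- zip (belast x s) s) f pr.1 pr.2.
Proof. by elim: s x => [|y s IH] x /=; rewrite ?big_nil // big_cons IH. Qed.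

Lemma cycle_sum_cons f x s : cycle_sum f (x :: s) = psum f x (rcons s x).
Proof. by rewrite /cycle_sum rot1_cons psum_zip belast_rcons. Qed.

Lemma psum_le0 F f x s : path F x s -> (forall a b, F a b -> f a b <= 0) -> psum f x s <= 0.
Proof.
elim: s x => [|y s IH] x //= /andP[Fxy Hp] Hf.
by rewrite -[0]addr0 lerD // ?Hf // IH.
Qed.

Lemma cycle_sum_shift f p c : cycle_sum (shift f p) c = cycle_sum f c.
Proof.
case: c => [|x s]; first by rewrite /cycle_sum /= !big_nil.
by rewrite !cycle_sum_cons psum_shift last_rcons; ring.
Qed.

Lemma equiv_shift e beta p : equivalent e beta (shift beta p).
Proof.
move=> c _; case: c => [|x s]; first by rewrite /cycle_sum big_nil.
rewrite cycle_sum_cons psum_sub psum_shift last_rcons; ring.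
Qed.

Lemma beta_in_ext e f g v : (forall x y, e x y -> f x y = g x y) ->
  beta_in e f v = beta_in e g v.
Proof. by move=> H; apply: eq_bigr => u euv; rewrite H. Qed.

Lemma beta_out_ext e f g v : (forall x y, e x y -> f x y = g x y) ->
  beta_out e f v = beta_out e g v.
Proof. by move=> H; apply: eq_bigr => u euv; rewrite H. Qed.

Lemma balanced_ext e f g : (forall x y, e x y -> f x y = g x y) ->
  balanced e f -> balanced e g.
Proof. by move=> H Hb v; rewrite -(beta_in_ext v H) -(beta_out_ext v H). Qed.

Lemma connect_const e (P : V -> R) a b : (forall x y, e x y -> P x = P y) ->
  connect e a b -> P a = P b.
Proof.
move=> H /connectP[s Hp ->]; elim: s a Hp => [|y s IH] a //= /andP[eay Hp].
by rewrite (H _ _ eay) IH.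
Qed.

Lemma connect_rev e a b : connect (fun x y => e y x) a b -> connect e b a.
Proof.
move=> /connectP[s Hp ->]; apply/connectP.
exists (rev (belast a s)); last by rewrite -(last_rcons a (belast a s) (last a s)) -lastI
   /= ?last_rev; case: s Hp => //= y s _; rewrite rev_cons last_rcons.
by rewrite rev_path.
Qed.

End Graph.

Section Graph2.
Variables (R : realFieldType) (V : finType).
Implicit Types (e F : rel V) (f g beta gamma : V -> V -> R) (p q : V -> R).

Lemma ex_argmax (I : finType) (P : pred I) (G : I -> R) i0 : P i0 ->
  exists i, P i /\ forall j, P j -> G j <= G i.
Proof.
move=> Pi0; case: (arg_maxP G Pi0) => i Pi Hi; exists i; split; first exact: Pi.
move=> j Pj; exact: Hi.
Qed.

Lemma ex_argminn (I : finType) (P : pred I) (G : I -> nat) i0 : P i0 ->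
  exists i, P i /\ forall j, P j -> (G i <= G j)%N.
Proof.
move=> Pi0; case: (arg_minnP G Pi0) => i Pi Hi; exists i; split; first exact: Pi.
move=> j Pj; exact: Hi.
Qed.

Lemma in_cases e f v :
  (beta_in e f v = None /\ forall u, ~~ e u v) \/
  (exists m, beta_in e f v = Some m /\ (exists u, e u v /\ f u v = m) /\
     forall u, e u v -> f u v <= m).
Proof. exact: (obig_cases (fun u => e u v) (fun u => f u v)). Qed.

Lemma out_cases e f v :
  (beta_out e f v = None /\ forall u, ~~ e v u) \/
  (exists m, beta_out e f v = Some m /\ (exists u, e v u /\ f v u = m) /\
     forall u, e v u -> f v u <= m).
Proof. exact: (obig_cases (fun u => e v u) (fun u => f v u)). Qed.

Lemma in_some e f v m : beta_in e f v = Some m ->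
  (exists u, e u v /\ f u v = m) /\ forall u, e u v -> f u v <= m.
Proof.
by case: (in_cases e f v) => [[-> _]//|[m' [-> H]]] [<-].
Qed.

Lemma out_some e f v m : beta_out e f v = Some m ->
  (exists u, e v u /\ f v u = m) /\ forall u, e v u -> f v u <= m.
Proof.
by case: (out_cases e f v) => [[-> _]//|[m' [-> H]]] [<-].
Qed.

Lemma in_exists e f u v : e u v -> exists m, beta_in e f v = Some m /\ f u v <= m.
Proof.
move=> euv; case: (in_cases e f v) => [[_ H]|[m [-> [_ Hm]]]].
  by move: (H u); rewrite euv.
by exists m; split=> //; exact: Hm.
Qed.

Lemma out_exists e f u v : e v u -> exists m, beta_out e f v = Some m /\ f v u <= m.
Proof.
move=> euv; case: (out_cases e f v) => [[_ H]|[m [-> [_ Hm]]]].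
  by move: (H u); rewrite euv.
by exists m; split=> //; exact: Hm.
Qed.

Lemma cycle_neg e F f u v : subrel F e -> F u v -> connect F v u ->
  (forall x y, F x y -> f x y <= 0) -> f u v < 0 ->
  exists c, directed_cycle e c /\ cycle_sum f c < 0.
Proof.
move=> sFe Fuv /connectP[s Hp Hu] Hf fuv.
move: Fuv fuv; rewrite Hu; case: (shortenP Hp) => s' Hp' Huq _ Fuv fuv.
exists (v :: s'); split.
  split=> //; apply: (sub_cycle sFe); by rewrite /= rcons_path Hp' /=.
rewrite cycle_sum_cons psum_rcons.
have H1 := psum_le0 Hp' Hf.
move: H1 fuv; set a := psum _ _ _; set b := f _ _; lra.
Qed.

Lemma reach_cycle F b : (forall v, connect F b v -> exists z, F v z) ->
  exists v z, [/\ connect F b v, F v z & connect F z v].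
Proof.
move=> H.
have [v [bv Hmin]] := @ex_argminn _ (fun x => connect F b x)
  (fun x => #|[set y | connect F x y]|) b (connect0 F b).
have [z Fvz] := H v bv.
exists v, z; split=> //.
have bz : connect F b z := connect_trans bv (connect1 Fvz).
have sub : [set y | connect F z y] \subset [set y | connect F v y].
  by apply/subsetP => y; rewrite !inE => zy; apply: connect_trans (connect1 Fvz) zy.
have := Hmin z bz => le.
have eqs : [set y | connect F z y] = [set y | connect F v y].
  by apply/eqP; rewrite eqEcard sub le.
have : v \in [set y | connect F v y] by rewrite inE connect0.
by rewrite -eqs inE.
Qed.

Lemma bal_bound e beta p (lam : R) : balanced e (shift beta p) ->
  (forall x y, e x y -> beta x y <= lam) ->
  forall x y, e x y -> shift beta p x y <= lam.
Proof.
move=> Hb Hbeta x y exy; rewrite leNgt; apply/negP => Hgt.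
set g := shift beta p.
have [[a b] [/= eab Hmax]] := @ex_argmax _ (fun pr : V * V => e pr.1 pr.2)
  (fun pr => g pr.1 pr.2) (x, y) exy.
set m := g a b.
have mgt : lam < m by apply: lt_le_trans Hgt (Hmax (x,y) exy).
have [y0 [eu0 Hy0]] := @ex_argmax _ (fun y => [exists u, e u y && (g u y == m)])
  p b (introT existsP (ex_intro _ a (introT andP (conj eab (eqxx _))))).
move/existsP: eu0 => [u1 /andP[eu1 /eqP gu1]].
have [m1 [Hin1 le1]] := in_exists g eu1.
have [_ Hin2] := in_some Hin1.
have m1m : m1 = m.
  apply/eqP; rewrite eq_le; apply/andP; split.
  - have [[u2 [eu2 <-]] _] := in_some Hin1; exact: (Hmax (u2, y0) eu2).
  - by rewrite -gu1.
rewrite Hb m1m in Hin1.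
have [[z [eyz gyz]] _] := out_some Hin1.
have zin : [exists u, e u z && (g u z == m)] by apply/existsP; exists y0; apply/andP; split=> //; apply/eqP; exact: gyz.
have := Hy0 z zin.
have : beta y0 z <= lam := Hbeta _ _ eyz.
move: gyz; rewrite /g /shift => gyz.
move=> hb hpz.
have : m <= lam + p z - p y0 by rewrite -gyz lerD2r lerD2r.
move=> h; have : lam < lam + p z - p y0 := lt_le_trans mgt h.
by rewrite -addrA ltrDl subr_gt0 ltNge hpz.
Qed.

End Graph2.

Section Uniq.
Variables (R : realFieldType) (V : finType).
Implicit Types (e F : rel V) (f g beta gamma : V -> V -> R) (p q : V -> R).

Lemma cycle_sum_ext f g c : (forall x y, f x y = g x y) -> cycle_sum f c = cycle_sum g c.
Proof. by move=> H; apply: eq_bigr => pr _; rewrite H. Qed.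

Lemma cycle_sumN f c : cycle_sum (fun x y => - f x y) c = - cycle_sum f c.
Proof. by rewrite /cycle_sum -sumrN. Qed.

Lemma thr_sub e beta w : subrel (thr_edge e beta w) e.
Proof. by move=> x y /andP[]. Qed.

Lemma uniq_dir e beta : (forall w, G_thr_strongly_connected e beta w) ->
  unique_balanced_in_class e beta.
Proof.
move=> Hthr gamma Hbal Heq.
apply: NNPP => Hne.
have [u0 [v0 [euv0 nuv0]]] : exists u v, e u v /\ gamma u v <> beta u v.
  apply: NNPP => H; apply: Hne => u v euv; apply: NNPP => hn; apply: H.
  by exists u, v.
pose D := fun pr : V * V => e pr.1 pr.2 && (gamma pr.1 pr.2 != beta pr.1 pr.2).
pose mx := fun pr : V * V => Order.max (beta pr.1 pr.2) (gamma pr.1 pr.2).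
have D0 : D (u0, v0) by rewrite /D /= euv0; apply/eqP.
have [[a b] [Dab Hmax]] := @ex_argmax _ _ D mx (u0, v0) D0.
move: Dab; rewrite /D /= => /andP[eab nab].
set M := mx (a, b).
have HD : forall x y, e x y -> gamma x y != beta x y -> beta x y <= M /\ gamma x y <= M.
  move=> x y exy nxy; have := Hmax (x, y); rewrite /D /= exy nxy /mx /= => /(_ isT).
  by rewrite ge_max => /andP[].
have contra : forall F f u v, subrel F e -> F u v -> connect F v u ->
    (forall x y, F x y -> f x y <= 0) -> f u v < 0 ->
    (forall x y, f x y = beta x y - gamma x y) \/ (forall x y, f x y = gamma x y - beta x y) -> False.
  move=> F f u v sFe Fuv cvu Hf fuv Hform.
  have [c [dc Hc]] := cycle_neg sFe Fuv cvu Hf fuv.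
  have H0 := Heq c dc.
  case: Hform => Hform.
  - by move: Hc; rewrite (cycle_sum_ext c Hform) H0 ltxx.
  - move: Hc; rewrite (cycle_sum_ext (g := fun x y => - (beta x y - gamma x y)) c); last first.
      by move=> x y; rewrite Hform opprB.
    by rewrite cycle_sumN H0 oppr0 ltxx.
case: (classic (exists x y, [/\ e x y, gamma x y != beta x y & beta x y = M])) => [CaseA|CaseB].
-
  have [x [y [exy nxy bxy]]] := CaseA.
  pose F := thr_edge e beta M.
  have Fxy : F x y by rewrite /F /thr_edge exy bxy lexx.
  have Nx : nonisolated F x by apply/existsP; exists y; rewrite Fxy orbT.
  have Ny : nonisolated F y by apply/existsP; exists x; rewrite Fxy.
  have cyx : connect F y x := Hthr M y x Ny Nx.
  apply: (contra F (fun x y => gamma x y - beta x y) x y (@thr_sub e beta M) Fxy cyx); last by right.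
  + move=> s t /andP[est Mst]; case: (eqVneq (gamma s t) (beta s t)) => [->|nst].
      by rewrite subrr.
    have [_ gM] := HD s t est nst; rewrite subr_le0; exact: le_trans gM Mst.
  + have [_ gM] := HD x y exy nxy; rewrite subr_lt0 lt_neqAle nxy /= bxy; exact: gM.
-
  have HB : forall x y, e x y -> gamma x y != beta x y -> beta x y < M.
    move=> x y exy nxy; have [bM _] := HD x y exy nxy.
    rewrite lt_neqAle bM andbT; apply/negP => /eqP bxy; apply: CaseB; by exists x, y.
  have bab : beta a b < M := HB a b eab nab.
  have gab : gamma a b = M.
    move: bab; rewrite /M /mx /=; case: (leP (beta a b) (gamma a b)) => h //.
    by rewrite ltxx.
  pose F := fun x y => [&& e x y, beta x y <= gamma x y & M <= gamma x y].
  pose N := nonisolated (thr_edge e beta M).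
  pose f := fun x y => beta x y - gamma x y.
  have sFe : subrel F e by move=> x y /and3P[].
  have HfF : forall x y, F x y -> f x y <= 0 by move=> x y /and3P[_ h _]; rewrite /f subr_le0.
  have Fab : F a b by rewrite /F eab gab lexx andbT ltW // -gab.
  have fab : f a b < 0 by rewrite /f subr_lt0 gab.
  have Hthr_sub : forall x y, thr_edge e beta M x y -> F x y.
    move=> x y /andP[exy Mb]; case: (eqVneq (gamma x y) (beta x y)) => [gb|nxy].
      by rewrite /F exy gb lexx Mb.
    by have := HB x y exy nxy; rewrite ltNge Mb.
  have Hneg : forall x y, F x y -> (N x && N y) || (f x y < 0).
    move=> x y Fxy; move: (Fxy) => /and3P[exy bg Mg].
    case: (eqVneq (gamma x y) (beta x y)) => [gb|nxy].
      have Txy : thr_edge e beta M x y by rewrite /thr_edge exy -gb Mg.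
      apply/orP; left; apply/andP; split; apply/existsP.
        by exists y; rewrite Txy orbT.
      by exists x; rewrite Txy.
    by apply/orP; right; rewrite /f subr_lt0 lt_neqAle bg eq_sym nxy.
  have Hin_out : forall u v, F u v -> exists z, F v z.
    move=> u v /and3P[euv _ Mg].
    have [m [Hm gm]] := in_exists gamma euv.
    rewrite Hbal in Hm; have [[z [evz gz]] _] := out_some Hm.
    have Mz : M <= gamma v z by rewrite gz; exact: le_trans Mg gm.
    exists z; rewrite /F evz Mz andbT /=.
    case: (eqVneq (gamma v z) (beta v z)) => [->//|nvz].
    by apply: ltW; apply: lt_le_trans (HB v z evz nvz) _.
  have Hout_in : forall v z, F v z -> exists u, F u v.
    move=> v z /and3P[evz _ Mg].
    have [m [Hm gm]] := out_exists gamma evz.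
    rewrite -Hbal in Hm; have [[u [euv gu]] _] := in_some Hm.
    have Mu : M <= gamma u v by rewrite gu; exact: le_trans Mg gm.
    exists u; rewrite /F euv Mu andbT /=.
    case: (eqVneq (gamma u v) (beta u v)) => [->//|nuv].
    by apply: ltW; apply: lt_le_trans (HB u v euv nuv) _.
  have contraF : forall u v, F u v -> connect F v u -> f u v < 0 -> False.
    by move=> u v Fuv cvu fuv; apply: (contra F f u v sFe Fuv cvu HfF fuv); left.
  have Hfwd : forall v, connect F b v -> exists z, F v z.
    move=> v /connectP[s Hp ->]; case/lastP: s Hp => [|s y] Hp /=.
      exact: Hin_out Fab.
    rewrite rcons_path in Hp; move: Hp => /andP[_ Hl].
    by rewrite last_rcons; exact: Hin_out Hl.
  have Hbwd : forall v, connect (fun x y => F y x) a v -> exists z, F z v.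
    move=> v /connect_rev /connectP[s Hp Hl]; case: s Hp Hl => [|y s] /= Hp Hl.
      rewrite -Hl; exact: Hout_in Fab.
    by move: Hp => /andP[Fvy _]; exact: Hout_in Fvy.
  have [u [bu Nu]] : exists u, connect F b u /\ N u.
    apply: NNPP => Hno.
    have [v [z [bv Fvz czv]]] := reach_cycle Hfwd.
    have Nv : ~~ N v by apply/negP => Nv; apply: Hno; exists v.
    move: (Hneg v z Fvz); rewrite (negbTE Nv) /= => fvz.
    exact: contraF Fvz czv fvz.
  have [t [ta Nt]] : exists t, connect F t a /\ N t.
    apply: NNPP => Hno.
    have [v [z [av Fvz czv]]] := reach_cycle Hbwd.
    have Nv : ~~ N v by apply/negP => Nv; apply: Hno; exists v; split=> //; exact: connect_rev.
    move: (Hneg z v Fvz); rewrite (negbTE Nv) andbF /= => fzv.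
    exact: contraF Fvz (connect_rev czv) fzv.
  have ut : connect F u t.
    apply: (connect_sub (e := thr_edge e beta M)) (Hthr M u t Nu Nt).
    by move=> x y h; apply: connect1; exact: Hthr_sub.
  apply: (contraF a b Fab) fab.
  exact: connect_trans (connect_trans bu ut) ta.
Qed.

End Uniq.

Section Contract.
Variables (R : realFieldType) (V : finType) (e : rel V) (beta : V -> V -> R).
Variables (C : {set V}) (c0 : V).
Hypothesis Hc0 : c0 \in C.

Definition Pc (x : V) : bool := (x \notin C) || (x == c0).
Definition Vc : finType := {x : V | Pc x}.
Definition c0' : Vc := exist _ c0 (introT orP (or_intror (eqxx c0))).
Definition pic (x : V) : Vc := insubd c0' x.

Lemma val_pic_in x : x \in C -> val (pic x) = c0.
Proof.
by move=> xC; rewrite val_insubd /Pc xC /=; case: eqP => [->|].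
Qed.

Lemma val_pic_out x : x \notin C -> val (pic x) = x.
Proof. by move=> xC; rewrite val_insubd /Pc xC. Qed.

Lemma pic_in x : x \in C -> pic x = c0'.
Proof. by move=> xC; apply: val_inj; rewrite val_pic_in. Qed.

Lemma pic_val X : pic (val X) = X.
Proof. exact: valKd. Qed.

Lemma pic_eq_out x y : x \notin C -> pic y = pic x -> y = x.
Proof.
move=> xC; case yC: (y \in C) => H.
  by have := val_pic_out xC; rewrite -H val_pic_in // => xc0; move: xC; rewrite -xc0 Hc0.
by have := congr1 val H; rewrite !val_pic_out ?yC.
Qed.

Lemma card_Vc c1 : c1 \in C -> c1 != c0 -> (#|Vc| < #|V|)%N.
Proof.
move=> c1C c1n; rewrite card_sig.
apply: (leq_ltn_trans (n := #|predC1 c1|)); last by rewrite cardC1 ltn_predL; apply/card_gt0P; exists c1.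
apply: subset_leq_card; apply/subsetP => x; rewrite !inE /Pc.
case/orP => [xC|/eqP->]; last by rewrite eq_sym.
by apply/eqP => xc1; move: xC; rewrite xc1 c1C.
Qed.

Definition ecP (X Y : Vc) (pr : V * V) : bool := [&& pic pr.1 == X, pic pr.2 == Y & e pr.1 pr.2].
Definition ec : rel Vc := fun X Y => [exists pr, ecP X Y pr].
Definition bc (X Y : Vc) : R := odflt 0 (\big[@omax R/None]_(pr | ecP X Y pr) Some (beta pr.1 pr.2)).

Lemma ec_pic x y : e x y -> ec (pic x) (pic y).
Proof. by move=> exy; apply/existsP; exists (x, y); rewrite /ecP !eqxx exy. Qed.

Lemma bc_ge x y : e x y -> beta x y <= bc (pic x) (pic y).
Proof.
move=> exy; rewrite /bc.
have Pxy : ecP (pic x) (pic y) (x, y) by rewrite /ecP !eqxx exy.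
case: (obig_cases (ecP (pic x) (pic y)) (fun pr => beta pr.1 pr.2)) => [[_ H]|[m [-> [_ Hm]]]].
  by move: (H (x, y)); rewrite Pxy.
exact: (Hm (x, y) Pxy).
Qed.

Lemma bc_att X Y : ec X Y -> exists x y, [/\ pic x = X, pic y = Y, e x y & beta x y = bc X Y].
Proof.
move=> /existsP[pr0 P0]; rewrite /bc.
case: (obig_cases (ecP X Y) (fun pr => beta pr.1 pr.2)) => [[_ H]|[m [-> [[[x y] [Pxy <-]] _]]]].
  by move: (H pr0); rewrite P0.
by move: Pxy; rewrite /ecP /= => /and3P[/eqP<- /eqP<- exy]; exists x, y.
Qed.

Lemma connect_pic a b : connect e a b -> connect ec (pic a) (pic b).
Proof.
move=> /connectP[s Hp ->]; elim: s a Hp => [|y s IH] a //= /andP[eay Hp].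
exact: connect_trans (connect1 (ec_pic eay)) (IH _ Hp).
Qed.

Lemma sc_ec : strongly_connected e -> strongly_connected ec.
Proof.
move=> H X Y _ _; rewrite -(pic_val X) -(pic_val Y); exact: connect_pic (H _ _ isT isT).
Qed.

Variables (lam : R) (p' : Vc -> R).

Lemma shift_le x y : e x y ->
  shift beta (fun v => p' (pic v)) x y <= shift bc p' (pic x) (pic y).
Proof. by move=> exy; rewrite /shift lerD2r lerD2r bc_ge. Qed.

Lemma shift_att X Y : ec X Y -> exists x y, [/\ pic x = X, pic y = Y, e x y &
  shift beta (fun v => p' (pic v)) x y = shift bc p' X Y].
Proof.
move=> /bc_att[x [y [px py exy bxy]]]; exists x, y; split=> //.
by rewrite /shift px py bxy.
Qed.

Lemma in_pic v : v \notin C ->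
  beta_in e (shift beta (fun v => p' (pic v))) v = beta_in ec (shift bc p') (pic v).
Proof.
move=> vC; apply: obig_eq2.
- move=> u euv; exists (pic u); split; [exact: ec_pic | exact: shift_le].
- move=> U eU; have [x [y [px py exy Hs]]] := shift_att eU.
  have yv := pic_eq_out vC py; subst y.
  by exists x; split=> //; rewrite Hs.
Qed.

Lemma out_pic v : v \notin C ->
  beta_out e (shift beta (fun v => p' (pic v))) v = beta_out ec (shift bc p') (pic v).
Proof.
move=> vC; apply: obig_eq2.
- move=> u euv; exists (pic u); split; [exact: ec_pic | exact: shift_le].
- move=> U eU; have [x [y [px py exy Hs]]] := shift_att eU.
  have xv := pic_eq_out vC px; subst x.
  by exists y; split=> //; rewrite Hs.
Qed.

Hypothesis HCin : forall x, x \in C -> exists y, [/\ y \in C, e y x & beta y x = lam].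
Hypothesis HCout : forall x, x \in C -> exists y, [/\ y \in C, e x y & beta x y = lam].
Hypothesis Hle' : forall X Y, ec X Y -> shift bc p' X Y <= lam.

Lemma in_C v : v \in C -> beta_in e (shift beta (fun v => p' (pic v))) v = Some lam.
Proof.
move=> vC; have [y [yC eyv byv]] := HCin vC.
apply: (obig_some (i := y)) => //.
  by rewrite /shift (pic_in vC) (pic_in yC) byv addrK.
move=> u euv; apply: le_trans (shift_le euv) _; exact: Hle' (ec_pic euv).
Qed.

Lemma out_C v : v \in C -> beta_out e (shift beta (fun v => p' (pic v))) v = Some lam.
Proof.
move=> vC; have [y [yC evy bvy]] := HCout vC.
apply: (obig_some (i := y)) => //.
  by rewrite /shift (pic_in vC) (pic_in yC) bvy addrK.
move=> u evu; apply: le_trans (shift_le evu) _; exact: Hle' (ec_pic evu).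
Qed.

Lemma lift_balanced : balanced ec (shift bc p') ->
  balanced e (shift beta (fun v => p' (pic v))).
Proof.
move=> Hb v; case vC: (v \in C); first by rewrite in_C ?out_C.
by rewrite in_pic ?vC // out_pic ?vC // Hb.
Qed.

End Contract.

Section Norm.
Variables (R : realFieldType) (V : finType) (e : rel V) (beta : V -> V -> R).

Fixpoint all_seqs (n : nat) : seq (seq V) :=
  if n is n'.+1 then [::] :: [seq x :: s | x <- enum V, s <- all_seqs n'] else [:: [::]].

Lemma mem_all_seqs n s : (s \in all_seqs n) = (size s <= n)%N.
Proof.
elim: n s => [|n IH] [|x s] //=.
rewrite inE /= ltnS -IH; apply/allpairsP/idP => [[[y t] /= [_ Ht [Ex Es]]]|Hs].
  by rewrite Es.
by exists (x, s); rewrite mem_enum.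
Qed.

Lemma not_uniq_split (s : seq V) : ~~ uniq s ->
  exists a y b c, s = a ++ y :: b ++ y :: c.
Proof.
elim: s => [//|z s IH] /=; rewrite negb_and negbK => /orP[zs|/IH[a [y [b [c ->]]]]].
  by case/splitPr: zs => b c; exists [::], z, b, c.
by exists (z :: a), y, b, c.
Qed.

Lemma uniq_size (s : seq V) : uniq s -> (size s <= #|V|)%N.
Proof. by move=> /card_uniqP <-; exact: max_card. Qed.

Lemma seq_argmax (T : eqType) (l : seq T) (G : T -> R) : l != [::] ->
  exists2 x, x \in l & forall y, y \in l -> G y <= G x.
Proof.
elim: l => [//|a l IH] _; case: (eqVneq l [::]) => [->|ln].
  by exists a; rewrite ?inE // => y; rewrite inE => /eqP->.
have [x xl Hx] := IH ln; case: (leP (G a) (G x)) => h.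
  by exists x; rewrite ?inE ?xl ?orbT // => y; rewrite inE => /orP[/eqP->//|/Hx].
exists a; rewrite ?inE ?eqxx // => y; rewrite inE => /orP[/eqP->//|/Hx yx].
exact: le_trans yx (ltW h).
Qed.

Definition closedw x s := [&& path e x s, last x s == x & (0 < size s)%N].

Definition CW := [seq pr <- [seq (x, s) | x <- enum V, s <- all_seqs #|V|] | closedw pr.1 pr.2].
Definition meanw (pr : V * seq V) := psum beta pr.1 pr.2 / (size pr.2)%:R.

Lemma mem_CW x s : closedw x s -> (size s <= #|V|)%N -> (x, s) \in CW.
Proof.
move=> Hc Hs; rewrite mem_filter Hc /=; apply/allpairsP; exists (x, s).
by rewrite mem_enum mem_all_seqs.
Qed.

Lemma psum_split (f : V -> V -> R) (x y : V) (a b c : seq V) : psum f x (a ++ y :: b ++ y :: c) =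
  psum f x (a ++ y :: c) + psum f y (rcons b y).
Proof.
rewrite psum_rcons !psum_cat /= !psum_cat /=; ring.
Qed.

Variable lam : R.
Hypothesis Hlam : forall pr, pr \in CW -> meanw pr <= lam.

Lemma cw_le x s : closedw x s -> psum (fun a b => beta a b - lam) x s <= 0.
Proof.
have [k] := ubnP (size s); elim: k x s => [//|k IH] x s Hk Hc.
case: (leqP (size s) #|V|) => Hs.
  have := Hlam (mem_CW Hc Hs); rewrite /meanw /= psum_subc.
  move: Hc => /and3P[_ _ s0].
  have sp : 0 < (size s)%:R :> R by rewrite ltr0n.
  by rewrite ler_pdivrMr // mulrC subr_le0.
have : ~~ uniq s by apply/negP => /uniq_size; rewrite leqNgt Hs.
move=> /not_uniq_split[a [y [b [c Hsplit]]]]; subst s.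
move: Hc => /and3P[Hp /eqP Hl _].
rewrite psum_split.
have sz : size (a ++ y :: b ++ y :: c) = (size a + size c + size b + 2)%N.
  by rewrite size_cat /= size_cat /=; lia.
rewrite sz in Hk.
move: Hp; rewrite cat_path /= cat_path /= => /andP[pa /andP[eay /andP[pb /andP[eby pc]]]].
apply: (le_trans (y := 0 + 0)); last by rewrite addr0.
apply: lerD; apply: IH.
- by rewrite size_cat /=; lia.
- rewrite /closedw cat_path pa /= eay pc /= size_cat /= addnS ltnS leq0n andbT.
  by rewrite last_cat /= -Hl last_cat /= last_cat.
- by rewrite size_rcons; lia.
- by rewrite /closedw rcons_path pb eby last_rcons eqxx size_rcons.
Qed.

End Norm.

Section Norm2.
Variables (R : realFieldType).

Lemma bigmax_ge (T : eqType) (l : seq T) (P : pred T) (F : T -> R) x :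
  x \in l -> P x -> F x <= \big[Order.max/0]_(y <- l | P y) F y.
Proof.
elim: l => [//|a l IH]; rewrite inE big_cons => /orP[/eqP<- Px|xl Px].
  by rewrite Px le_max lexx.
case: (P a); last exact: IH.
by rewrite le_max (IH xl Px) orbT.
Qed.

Lemma bigmax_le (T : eqType) (l : seq T) (P : pred T) (F : T -> R) M :
  0 <= M -> (forall x, x \in l -> P x -> F x <= M) ->
  \big[Order.max/0]_(y <- l | P y) F y <= M.
Proof.
move=> M0; elim: l => [|a l IH] H; first by rewrite big_nil.
rewrite big_cons; have IH' : \big[Order.max/0]_(y <- l | P y) F y <= M.
  by apply: IH => x xl; apply: H; rewrite inE xl orbT.
case Pa: (P a) => //; rewrite ge_max IH' andbT; apply: H => //; exact: mem_head.
Qed.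

Variables (V : finType) (e : rel V) (beta : V -> V -> R) (lam : R).
Hypothesis Hlam : forall pr, pr \in CW e -> meanw beta pr <= lam.

Definition wl := fun a b => beta a b - lam.
Definition OW := [seq pr <- [seq (x, s) | x <- enum V, s <- all_seqs V #|V|] | path e pr.1 pr.2].
Definition qpot (v : V) := \big[Order.max/0]_(pr <- OW | last pr.1 pr.2 == v) psum wl pr.1 pr.2.

Lemma ow_le x s : path e x s -> psum wl x s <= qpot (last x s).
Proof.
have [k] := ubnP (size s); elim: k x s => [//|k IH] x s Hk Hp.
case: (leqP (size s) #|V|) => Hs.
  have Hin : (x, s) \in OW.
    rewrite mem_filter Hp /=; apply/allpairsP; exists (x, s).
    by rewrite mem_enum mem_all_seqs.
  rewrite /qpot; apply: (bigmax_ge (P := fun pr => last pr.1 pr.2 == last x s)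
    (fun pr => psum wl pr.1 pr.2) Hin) => /=; exact: eqxx.
have : ~~ uniq s by apply/negP => /uniq_size; rewrite leqNgt Hs.
move=> /not_uniq_split[a [y [b [c Hsplit]]]]; subst s.
rewrite psum_split.
have sz : size (a ++ y :: b ++ y :: c) = (size a + size c + size b + 2)%N.
  by rewrite size_cat /= size_cat /=; lia.
rewrite sz in Hk.
move: Hp; rewrite cat_path /= cat_path /= => /andP[pa /andP[eay /andP[pb /andP[eby pc]]]].
have Hcl : psum wl y (rcons b y) <= 0.
  apply: (cw_le Hlam); by rewrite /closedw rcons_path pb eby last_rcons eqxx size_rcons.
have Hr : psum wl x (a ++ y :: c) <= qpot (last x (a ++ y :: c)).
  apply: IH; first by rewrite size_cat /=; lia.
  by rewrite cat_path pa /= eay pc.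
have -> : last x (a ++ y :: b ++ y :: c) = last x (a ++ y :: c) by rewrite !last_cat /= last_cat.
move: Hcl Hr; set A := psum _ _ _; set B := psum _ _ _; set Q := qpot _; lra.
Qed.

Lemma q_pot a b : e a b -> qpot a + wl a b <= qpot b.
Proof.
move=> eab; rewrite -lerBrDr; apply: bigmax_le.
  by rewrite subr_ge0; have := ow_le (x := a) (s := [:: b]); rewrite /= eab addr0 => /(_ isT).
move=> [x s] Hin /eqP /= Hl; rewrite lerBrDr.
have Hp : path e x s by move: Hin; rewrite mem_filter => /andP[].
have := ow_le (x := x) (s := rcons s b); rewrite rcons_path Hp Hl eab last_rcons psum_rcons Hl.
by move=> /(_ isT).
Qed.

End Norm2.

Section Norm3.
Variables (R : realFieldType) (V : finType).

Lemma psum_eq0_path (e : rel V) (f : V -> V -> R) x s : path e x s ->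
  (forall a b, e a b -> f a b <= 0) -> psum f x s = 0 ->
  path (fun a b => e a b && (f a b == 0)) x s.
Proof.
move=> Hp Hf; elim: s x Hp => [//|y s IH] x /= /andP[exy Hp] H0.
have h1 := Hf _ _ exy; have h2 := psum_le0 Hp Hf.
have fz : f x y = 0 by move: H0 h1 h2; set A := f x y; set B := psum _ _ _; lra.
rewrite exy fz eqxx /=; apply: IH => //; by move: H0; rewrite fz add0r.
Qed.

Lemma normalize (e : rel V) (beta : V -> V -> R) : (exists a b, e a b) -> strongly_connected e ->
  exists lam (q : V -> R) x0 s1, (forall a b, e a b -> shift beta q a b <= lam) /\
    path (fun a b => e a b && (shift beta q a b == lam)) x0 (rcons s1 x0).
Proof.
move=> [a [b eab]] Hsc.
have [t Hpt Hlt] := connectP (Hsc b a isT isT).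
move: Hlt; case: (shortenP Hpt) => t' Hp' Hu' _ Hlt.
have Hcl : closedw e a (b :: t') by rewrite /closedw /= eab Hp' -Hlt eqxx.
have Hin := mem_CW Hcl (uniq_size Hu').
have CWn : CW e != [::] by apply/eqP => H; rewrite H in Hin.
have [[x0 s0] Hin0 Hmax] := seq_argmax (meanw beta) CWn.
have Hc0 : closedw e x0 s0 by move: Hin0; rewrite mem_filter => /andP[].
move: (Hc0) => /and3P[Hp0 /eqP Hl0 sz0].
case/lastP: s0 Hin0 Hmax Hc0 Hp0 Hl0 sz0 => [//|s1 y] Hin0 Hmax Hc0 Hp0 Hl0 sz0.
rewrite last_rcons in Hl0; subst y.
set lam := meanw beta (x0, rcons s1 x0).
have Hlam : forall pr, pr \in CW e -> meanw beta pr <= lam by move=> pr /Hmax.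
exists lam, (fun v => - qpot e beta lam v).
exists x0, s1; split.
  move=> u v euv; have := q_pot Hlam euv; rewrite /shift /wl.
  set A := qpot _ _ _ u; set B := qpot _ _ _ v; set c := beta u v; lra.
apply: (sub_path (e := fun u v => e u v && (shift beta (fun v => - qpot e beta lam v) u v - lam == 0))).
  by move=> u v /andP[-> /=]; rewrite subr_eq0.
apply: psum_eq0_path => //.
  move=> u v euv; have := q_pot Hlam euv; rewrite /shift /wl.
  set A := qpot _ _ _ u; set B := qpot _ _ _ v; set c := beta u v; lra.
rewrite psum_subc psum_shift last_rcons.
have szp : 0 < (size (rcons s1 x0))%:R :> R by rewrite ltr0n.
have : lam * (size (rcons s1 x0))%:R = psum beta x0 (rcons s1 x0).
  by rewrite /lam /meanw /= divfK // gt_eqF.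
move=> ->; set A := psum _ _ _; set B := qpot _ _ _ x0; ring.
Qed.

End Norm3.

Section Exist.
Variables (R : realFieldType).

Definition nedges (V : finType) (e : rel V) := #|[set pr : V * V | e pr.1 pr.2]|.

Definition noloop (V : finType) (e : rel V) (x0 : V) : rel V :=
  fun a b => e a b && ~~ ((a == x0) && (b == x0)).

Lemma noloop_path (V : finType) (e : rel V) x0 u s :
  path e u s -> uniq (u :: s) -> path (noloop e x0) u s.
Proof.
elim: s u => [//|y s IH] u /= /andP[euy Hp] /andP[uys Hu].
rewrite /noloop euy /= IH // andbT; apply/negP => /andP[/eqP ux /eqP yx].
by move: uys; rewrite inE ux yx eqxx.
Qed.

Lemma noloop_sc (V : finType) (e : rel V) x0 : strongly_connected e ->
  strongly_connected (noloop e x0).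
Proof.
move=> H u v _ _; have [s Hp Hl] := connectP (H u v isT isT).
move: Hl; case: (shortenP Hp) => s' Hp' Hu' _ ->.
by apply/connectP; exists s'; [exact: noloop_path|].
Qed.

Lemma noloop_card (V : finType) (e : rel V) x0 : e x0 x0 ->
  (nedges (noloop e x0) < nedges e)%N.
Proof.
move=> exx; apply: proper_card; apply/properP; split.
  by apply/subsetP => pr; rewrite !inE /noloop => /andP[].
by exists (x0, x0); rewrite !inE /noloop /= ?exx // eqxx.
Qed.

Lemma in_noloop (V : finType) (e : rel V) x0 (f : V -> V -> R) v : v != x0 ->
  beta_in (noloop e x0) f v = beta_in e f v.
Proof.
move=> vx; apply: eq_bigl => u; rewrite /noloop.
by rewrite (negbTE vx) andbF andbT.
Qed.

Lemma out_noloop (V : finType) (e : rel V) x0 (f : V -> V -> R) v : v != x0 ->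
  beta_out (noloop e x0) f v = beta_out e f v.
Proof.
move=> vx; apply: eq_bigl => u; rewrite /noloop.
by rewrite (negbTE vx) andbT.
Qed.

Lemma loop_balanced (V : finType) (e : rel V) x0 (f : V -> V -> R) (lam : R) :
  e x0 x0 -> f x0 x0 = lam -> (forall a b, noloop e x0 a b -> f a b <= lam) ->
  balanced (noloop e x0) f -> balanced e f.
Proof.
move=> exx fxx Hle Hb v; case: (eqVneq v x0) => [->|vx].
  have Hle' : forall a b, e a b -> f a b <= lam.
    move=> a b eab; case: (boolP ((a == x0) && (b == x0))) => [/andP[/eqP-> /eqP->]|h].
      by rewrite fxx.
    by apply: Hle; rewrite /noloop eab h.
  rewrite /beta_in /beta_out (obig_some (i := x0) (m := lam)) //; last by move=> j ej; exact: Hle'.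
  by rewrite (obig_some (i := x0) (m := lam)) //; move=> j ej; exact: Hle'.
by rewrite -(in_noloop e f vx) -(out_noloop e f vx).
Qed.

Lemma exist_step (V : finType) (e : rel V) (beta : V -> V -> R) :
  (forall (V' : finType) (e' : rel V') (beta' : V' -> V' -> R), (#|V'| < #|V|)%N ->
     strongly_connected e' -> exists p, balanced e' (shift beta' p)) ->
  (forall (e' : rel V) (beta' : V -> V -> R), (nedges e' < nedges e)%N ->
     strongly_connected e' -> exists p, balanced e' (shift beta' p)) ->
  strongly_connected e -> exists p, balanced e (shift beta p).
Proof.
move=> IHV IHE Hsc.
case: (boolP [exists pr : V * V, e pr.1 pr.2]) => [/existsP[[a b] /= eab]|noe]; last first.
  exists (fun _ => 0) => v.
  have ne : forall x y, ~~ e x y by move=> x y; apply/negP => exy; move/existsP: noe; apply; exists (x, y).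
  by rewrite /beta_in /beta_out !obig_none.
have [lam [q [x0 [s1 [Hle Hpath]]]]] := normalize beta (ex_intro _ a (ex_intro _ b eab)) Hsc.
set bh := shift beta q.
set c := x0 :: s1.
have Hcyc : cycle (fun a b => e a b && (bh a b == lam)) c by [].
set C := [set y | y \in c].
have HCin : forall x, x \in C -> exists y, [/\ y \in C, e y x & bh y x = lam].
  move=> x; rewrite inE => xc; have := prev_cycle Hcyc xc => /andP[ep /eqP bp].
  by exists (prev c x); rewrite inE mem_prev.
have HCout : forall x, x \in C -> exists y, [/\ y \in C, e x y & bh x y = lam].
  move=> x; rewrite inE => xc; have := next_cycle Hcyc xc => /andP[ep /eqP bp].
  by exists (next c x); rewrite inE mem_next.
have x0C : x0 \in C by rewrite inE mem_head.
case: (boolP [exists c1, (c1 \in C) && (c1 != x0)]) => [/existsP[c1 /andP[c1C c1n]]|single].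
-
  have [p' Hb'] := IHV _ (@ec V e C x0) (@bc R V e bh C x0) (card_Vc c1C c1n)
     (sc_ec (C:=C) (c0:=x0) Hsc).
  have Hbc : forall X Y, @ec V e C x0 X Y -> @bc R V e bh C x0 X Y <= lam.
    move=> X Y /(bc_att bh) [x [y [_ _ exy <-]]]; exact: Hle.
  have Hle' := bal_bound Hb' Hbc.
  have Hl := lift_balanced x0C HCin HCout Hle' Hb'.
  exists (fun v => q v + p' (pic C x0 v)).
  by apply: balanced_ext Hl => x y _; rewrite /shift /bh /shift; ring.
-
  have allx0 : forall y, y \in C -> y = x0.
    move=> y yC; apply/eqP; apply: contraNT single => yn; apply/existsP; exists y; by rewrite yC.
  have [y1 [y1C eyx byx]] := HCin _ x0C; rewrite (allx0 _ y1C) in eyx byx.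
  have [p' Hb'] := IHE (noloop e x0) bh (noloop_card eyx) (noloop_sc x0 Hsc).
  have Hle' := bal_bound Hb' (fun a b h => Hle a b (proj1 (andP h))).
  have Hb2 : balanced e (shift bh p').
    apply: (loop_balanced (lam := lam) eyx) => //.
    by rewrite /shift byx addrK.
  exists (fun v => q v + p' v).
  by apply: balanced_ext Hb2 => x y _; rewrite /shift /bh /shift; ring.
Qed.

Lemma exist_bal (V : finType) (e : rel V) (beta : V -> V -> R) :
  strongly_connected e -> exists p, balanced e (shift beta p).
Proof.
suff H : forall n m (V : finType) (e : rel V) (beta : V -> V -> R),
    (#|V| <= n)%N -> (nedges e <= m)%N -> strongly_connected e ->
    exists p, balanced e (shift beta p).
  by apply: (H #|V| (nedges e)).
elim=> [|n IHn] m; elim: m => [|m IHm] V' e' beta' Hn Hm Hsc;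
  apply: exist_step => // [V2 e2 b2 HV2 Hsc2|e2 b2 HE2 Hsc2].
- by move: HV2; rewrite ltnNge (leq_trans Hn (leq0n _)).
- by move: HE2; rewrite ltnNge (leq_trans Hm (leq0n _)).
- by move: HV2; rewrite ltnNge (leq_trans Hn (leq0n _)).
- apply: (IHm V' e2 b2) => //; by rewrite -ltnS (leq_trans HE2 Hm).
- by apply: (IHn (nedges e2) V2 e2 b2) => //; rewrite -ltnS (leq_trans HV2 Hn).
- by move: HE2; rewrite ltnNge (leq_trans Hm (leq0n _)).
- by apply: (IHn (nedges e2) V2 e2 b2) => //; rewrite -ltnS (leq_trans HV2 Hn).
- apply: (IHm V' e2 b2) => //; by rewrite -ltnS (leq_trans HE2 Hm).
Qed.

End Exist.

Section Push.
Variables (R : realFieldType) (V : finType) (e : rel V) (beta : V -> V -> R).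
Variables (C : {set V}) (c0 : V).
Hypothesis Hc0 : c0 \in C.
Variable lam : R.
Hypothesis Hle : forall x y, e x y -> beta x y <= lam.
Hypothesis HCin : forall x, x \in C -> exists y, [/\ y \in C, e y x & beta y x = lam].
Hypothesis HCout : forall x, x \in C -> exists y, [/\ y \in C, e x y & beta x y = lam].

Local Notation ec' := (@ec V e C c0).
Local Notation bc' := (@bc R V e beta C c0).
Local Notation pic' := (@pic V C c0).

Lemma bc_le X Y : ec' X Y -> bc' X Y <= lam.
Proof. by move=> /(bc_att beta)[x [y [_ _ exy <-]]]; exact: Hle. Qed.

Lemma pic_C x : x \in C -> pic' x = c0' C c0.
Proof. exact: pic_in. Qed.

Lemma val_in_C (X : Vc C c0) : val X \in C -> X = c0' C c0.
Proof.
move=> XC; apply: val_inj => /=; move: (valP X); rewrite /Pc XC /= => /eqP //.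
Qed.

Lemma push_balanced : balanced e beta -> balanced ec' bc'.
Proof.
move=> Hb X.
have Hz : forall (x y : V), e x y -> shift beta (fun v => (fun _ => 0) (pic' v)) x y = beta x y.
  by move=> x y _; rewrite /shift subr0 addr0.
have Hz' : forall (X Y : Vc C c0), ec' X Y -> shift bc' (fun _ => 0) X Y = bc' X Y.
  by move=> x y _; rewrite /shift subr0 addr0.
case XC: (val X \in C).
  have -> := val_in_C XC.
  have [y [yC eyx byx]] := HCin Hc0.
  have [z [zC exz bxz]] := HCout Hc0.
  have ec00 : ec' (c0' C c0) (c0' C c0).
    by have := ec_pic C c0 eyx; rewrite (pic_C yC) (pic_C Hc0).
  have l1 : bc' (c0' C c0) (c0' C c0) = lam.
    apply/eqP; rewrite eq_le bc_le //=.
    by have := bc_ge beta C c0 eyx; rewrite (pic_C yC) (pic_C Hc0) byx.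
  have Hb1 : forall j, ec' j (c0' C c0) -> bc' j (c0' C c0) <= lam by move=> j /bc_le.
  have Hb2 : forall j, ec' (c0' C c0) j -> bc' (c0' C c0) j <= lam by move=> j /bc_le.
  rewrite /beta_in /beta_out.
  rewrite (obig_some (P := fun j => ec' j (c0' C c0)) (F := fun j => bc' j (c0' C c0)) ec00 l1 Hb1).
  by rewrite (obig_some (P := fun j => ec' (c0' C c0) j) (F := fun j => bc' (c0' C c0) j) ec00 l1 Hb2).
have XC' : val X \notin C by rewrite XC.
rewrite -(pic_val X) -(beta_in_ext _ Hz') -(beta_out_ext _ Hz').
rewrite -(in_pic e beta Hc0 (fun _ => 0) XC') -(out_pic e beta Hc0 (fun _ => 0) XC').
by rewrite (beta_in_ext _ Hz) (beta_out_ext _ Hz) Hb.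
Qed.

End Push.

Section Thr.
Variables (R : realFieldType) (V : finType) (e : rel V) (beta : V -> V -> R).
Variables (C : {set V}) (c0 : V).
Hypothesis Hc0 : c0 \in C.
Local Notation ec' := (@ec V e C c0).
Local Notation bc' := (@bc R V e beta C c0).
Local Notation pic' := (@pic V C c0).

Lemma pic_same a b : pic' a = pic' b -> a = b \/ (a \in C /\ b \in C).
Proof.
move=> H; case aC: (a \in C); case bC: (b \in C); try by right.
- have := congr1 val H; rewrite val_pic_in // val_pic_out ?bC // => c0b.
  by move: bC; rewrite -c0b Hc0.
- have := congr1 val H; rewrite val_pic_out ?aC // val_pic_in // => c0a.
  by move: aC; rewrite c0a Hc0.
- by left; have := congr1 val H; rewrite !val_pic_out ?aC ?bC.
Qed.

Variable w : R.
Hypothesis HCconn : forall x y, x \in C -> y \in C -> connect (thr_edge e beta w) x y.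

Lemma same_connect a b : pic' a = pic' b -> connect (thr_edge e beta w) a b.
Proof. by move=> /pic_same[->|[aC bC]]; [exact: connect0|exact: HCconn]. Qed.

Lemma lift_connect X Y : connect (thr_edge ec' bc' w) X Y ->
  forall a b, pic' a = X -> pic' b = Y -> connect (thr_edge e beta w) a b.
Proof.
move=> /connectP[s Hp ->]; elim: s X Hp => [|Z s IH] X /=.
  by move=> _ a b <- Hb; exact: same_connect.
move=> /andP[/andP[eXZ wZ] Hp] a b Ha Hb.
have [x [z [px pz exz bxz]]] := bc_att beta eXZ.
apply: connect_trans (same_connect (a := a) (b := x) _) _; first by rewrite Ha px.
apply: connect_trans (connect1 (e := thr_edge e beta w) (x := x) (y := z) _) _.
  by rewrite /thr_edge exz bxz wZ.
exact: IH Hp z b pz Hb.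
Qed.

Lemma thr_transfer : G_thr_strongly_connected ec' bc' w -> G_thr_strongly_connected e beta w.
Proof.
move=> H a b Na Nb; apply: (lift_connect (X := pic' a) (Y := pic' b)) => //.
have Hn : forall x, nonisolated (thr_edge e beta w) x -> nonisolated (thr_edge ec' bc' w) (pic' x).
  move=> x /existsP[u /orP[/andP[eux wux]|/andP[exu wxu]]]; apply/existsP; exists (pic' u).
    apply/orP; left; apply/andP; split; [exact: ec_pic | exact: le_trans wux (bc_ge beta C c0 eux)].
  apply/orP; right; apply/andP; split; [exact: ec_pic | exact: le_trans wxu (bc_ge beta C c0 exu)].
exact: H (Hn _ Na) (Hn _ Nb).
Qed.

End Thr.

Section NonUniqHelp.
Variables (R : realFieldType) (V : finType).
Implicit Types (e : rel V) (f g beta : V -> V -> R).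

Lemma bal_nonis e beta w x : balanced e beta -> nonisolated (thr_edge e beta w) x ->
  (exists y, thr_edge e beta w y x) /\ (exists z, thr_edge e beta w x z).
Proof.
move=> Hb /existsP[u /orP[/andP[eux wux]|/andP[exu wxu]]].
- have [m [Hm le]] := in_exists beta eux; rewrite Hb in Hm.
  have [[z [exz bz]] _] := out_some Hm.
  split; first by exists u; rewrite /thr_edge eux wux.
  by exists z; rewrite /thr_edge exz bz (le_trans wux le).
- have [m [Hm le]] := out_exists beta exu; rewrite -Hb in Hm.
  have [[y [eyx bz]] _] := in_some Hm.
  split; last by exists u; rewrite /thr_edge exu wxu.
  by exists y; rewrite /thr_edge eyx bz (le_trans wxu le).
Qed.

Lemma beta_in_ext_v e f g v : (forall u, e u v -> f u v = g u v) ->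
  beta_in e f v = beta_in e g v.
Proof. by move=> H; apply: eq_bigr => u euv; rewrite H. Qed.

Lemma beta_out_ext_v e f g v : (forall u, e v u -> f v u = g v u) ->
  beta_out e f v = beta_out e g v.
Proof. by move=> H; apply: eq_bigr => u euv; rewrite H. Qed.

Lemma loop_dom e f x0 (lam : R) : e x0 x0 -> f x0 x0 = lam ->
  (forall a b, e a b -> f a b <= lam) ->
  (forall v, v != x0 -> beta_in e f v = beta_out e f v) -> balanced e f.
Proof.
move=> exx fxx Hle Hv v; case: (eqVneq v x0) => [->|vx]; last exact: Hv.
rewrite /beta_in /beta_out (obig_some (i := x0) (m := lam)) //; last by move=> j ej; exact: Hle.
by rewrite (obig_some (i := x0) (m := lam)) //; move=> j ej; exact: Hle.
Qed.

Definition vals e beta : seq R :=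
  undup [seq beta pr.1 pr.2 | pr <- [seq pr <- enum {: V * V} | e pr.1 pr.2]].

Lemma mem_vals e beta r : (r \in vals e beta) = [exists pr : V * V, e pr.1 pr.2 && (beta pr.1 pr.2 == r)].
Proof.
rewrite mem_undup; apply/mapP/existsP => [[pr]|[pr /andP[epr /eqP <-]]].
  by rewrite mem_filter => /andP[epr _] ->; exists pr; rewrite epr eqxx.
by exists pr; rewrite // mem_filter epr mem_enum.
Qed.

Lemma vals_lt e f g r : {subset vals e f <= vals e g} -> r \in vals e g -> r \notin vals e f ->
  (size (vals e f) < size (vals e g))%N.
Proof.
move=> Hs rg rf.
have := @uniq_leq_size _ (r :: vals e f) (vals e g).
rewrite /= rf undup_uniq /= => /(_ isT); apply.
by move=> x; rewrite inE => /orP[/eqP->//|/Hs].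
Qed.

End NonUniqHelp.

Section NonUniq.
Variable R : realFieldType.

Definition NUconcl (V : finType) (e : rel V) (beta : V -> V -> R) :=
  exists p : V -> R, balanced e (shift beta p) /\ exists x y, e x y /\ p x != p y.

Lemma nonuniq_step (V : finType) (e : rel V) (beta : V -> V -> R) :
  (forall (V' : finType) (e' : rel V') (beta' : V' -> V' -> R), (#|V'| < #|V|)%N ->
     strongly_connected e' -> balanced e' beta' ->
     (exists w, ~ G_thr_strongly_connected e' beta' w) -> NUconcl e' beta') ->
  (forall beta' : V -> V -> R, (size (vals e beta') < size (vals e beta))%N ->
     balanced e beta' -> (exists w, ~ G_thr_strongly_connected e beta' w) -> NUconcl e beta') ->
  strongly_connected e -> balanced e beta ->
  (exists w, ~ G_thr_strongly_connected e beta w) -> NUconcl e beta.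
Proof.
move=> IHV IHm Hsc Hb [w0 Hw0].
have [u0 [v0 [Nu0 Nv0 nc0]]] : exists u v, [/\ nonisolated (thr_edge e beta w0) u,
    nonisolated (thr_edge e beta w0) v & ~ connect (thr_edge e beta w0) u v].
  apply: NNPP => H; apply: Hw0 => u v Nu Nv; apply: NNPP => hn; apply: H.
  by exists u, v.
have [[a b] eab] : exists pr : V * V, e pr.1 pr.2.
  move: Nu0 => /existsP[t /orP[/andP[h _]|/andP[h _]]]; by [exists (t, u0) | exists (u0, t)].
have [[a1 b1] [/= eab1 Hmax1]] := @ex_argmax R _ (fun pr : V * V => e pr.1 pr.2)
   (fun pr => beta pr.1 pr.2) (a, b) eab.
set L1 := beta a1 b1.
have HL : forall x y, e x y -> beta x y <= L1 by move=> x y h; exact: (Hmax1 (x, y) h).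
set H1 := thr_edge e beta L1.
set N1 := nonisolated H1.
have H1eq : forall x y, H1 x y -> e x y /\ beta x y = L1.
  move=> x y /andP[exy le]; split=> //; apply/eqP; by rewrite eq_le HL.
have H1N : forall x y, H1 x y -> N1 x /\ N1 y.
  move=> x y h; split; apply/existsP; [exists y | exists x]; by rewrite h ?orbT.
have H1ab : H1 a1 b1 by rewrite /H1 /thr_edge eab1 lexx.
have Na1 : N1 a1 := (H1N _ _ H1ab).1.
have HN1in : forall x, N1 x -> exists y, [/\ N1 y, e y x & beta y x = L1].
  move=> x Nx; have [[y Hyx] _] := bal_nonis Hb Nx.
  by exists y; have [e1 b1'] := H1eq _ _ Hyx; split=> //; exact: (H1N _ _ Hyx).1.
have HN1out : forall x, N1 x -> exists y, [/\ N1 y, e x y & beta x y = L1].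
  move=> x Nx; have [_ [y Hxy]] := bal_nonis Hb Nx.
  by exists y; have [e1 b1'] := H1eq _ _ Hxy; split=> //; exact: (H1N _ _ Hxy).2.
have w0L1 : w0 <= L1.
  move: Nu0 => /existsP[t /orP[/andP[h1 h2]|/andP[h1 h2]]]; exact: le_trans h2 (HL _ _ h1).
case: (classic (strongly_connected_on N1 H1)) => Hsc1.
- case: (boolP [exists c1, N1 c1 && (c1 != a1)]) => [/existsP[c1 /andP[Nc1 c1n]]|single].
  +
    pose C := [set x | N1 x].
    have a1C : a1 \in C by rewrite inE.
    have c1C : c1 \in C by rewrite inE.
    have HCin : forall x, x \in C -> exists y, [/\ y \in C, e y x & beta y x = L1].
      by move=> x; rewrite inE => /HN1in[y [Ny eyx byx]]; exists y; rewrite inE.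
    have HCout : forall x, x \in C -> exists y, [/\ y \in C, e x y & beta x y = L1].
      by move=> x; rewrite inE => /HN1out[y [Ny eyx byx]]; exists y; rewrite inE.
    have Hb' := push_balanced a1C HL HCin HCout Hb.
    have Hfail' : exists w, ~ G_thr_strongly_connected (@ec V e C a1) (@bc R V e beta C a1) w.
      exists w0 => H'; apply: Hw0; apply: (thr_transfer a1C _ H').
      move=> x y; rewrite !inE => Nx Ny; apply: (connect_sub (e := H1)) (Hsc1 x y Nx Ny).
      move=> s t /andP[est le]; apply: connect1; by rewrite /thr_edge est (le_trans w0L1 le).
    have [p' [Hbal' [X [Y [eXY pXY]]]]] := IHV _ _ _ (card_Vc c1C c1n) (sc_ec Hsc) Hb' Hfail'.
    have Hle' := bal_bound Hbal' (@bc_le R V e beta C a1 L1 HL).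
    have Hl := lift_balanced a1C HCin HCout Hle' Hbal'.
    exists (fun v => p' (pic C a1 v)); split=> //.
    move: eXY => /existsP[[x y] /and3P[/eqP px /eqP py exy]].
    by exists x, y; rewrite /= px py.
  +
    have allN1 : forall x, N1 x -> x = a1.
      move=> x Nx; apply/eqP; apply: contraNT single => xn; apply/existsP; exists x; by rewrite Nx.
    have b1a1 : b1 = a1 := allN1 _ (H1N _ _ H1ab).2.
    have eaa : e a1 a1 by rewrite -{2}b1a1.
    have baa : beta a1 a1 = L1 by rewrite /L1 b1a1.
    pose nl := fun x y : V => ~~ ((x == a1) && (y == a1)).
    have u0v0 : u0 != v0 by apply/eqP => uv; apply: nc0; rewrite uv connect0.
    have [[a' b'] /= Hnl] : exists pr : V * V, e pr.1 pr.2 && nl pr.1 pr.2.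
      pose z := if u0 == a1 then v0 else u0.
      have za : z != a1 by rewrite /z; case: (eqVneq u0 a1) => [ua|un] //=; rewrite -ua eq_sym.
      have [s Hp Hz] := connectP (Hsc a1 z isT isT).
      case/lastP: s Hp Hz => [|s y] Hp Hz; first by move: za; rewrite Hz eqxx.
      rewrite last_rcons in Hz; rewrite rcons_path in Hp; move: Hp => /andP[_ el].
      exists (last a1 s, y); rewrite /= el /nl -Hz (negbTE za) andbF //.
    have [[a2 b2] [/= /andP[eab2 nl2] Hmax2]] := @ex_argmax R _
      (fun pr : V * V => e pr.1 pr.2 && nl pr.1 pr.2) (fun pr => beta pr.1 pr.2) (a', b') Hnl.
    set L2 := beta a2 b2.
    have HL2 : forall x y, e x y -> nl x y -> beta x y <= L2.
      by move=> x y exy nxy; apply: (Hmax2 (x, y)); rewrite /= exy.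
    have Hlt : forall x y, e x y -> nl x y -> beta x y < L1.
      move=> x y exy nxy; rewrite lt_neqAle HL // andbT; apply/eqP => bxy.
      have Hxy : H1 x y by rewrite /H1 /thr_edge exy bxy lexx.
      have [Nx Ny] := H1N _ _ Hxy.
      by move: nxy; rewrite /nl (allN1 _ Nx) (allN1 _ Ny) eqxx.
    have L21 : L2 < L1 := Hlt _ _ eab2 nl2.
    pose bf := fun x y => if (x == a1) && (y == a1) then L2 else beta x y.
    have bf_le : forall x y, e x y -> bf x y <= L2.
      move=> x y exy; rewrite /bf; case: ifP => [_|h]; first exact: lexx.
      by apply: HL2 => //; rewrite /nl h.
    have bf_v : forall x y, (x != a1) || (y != a1) -> bf x y = beta x y.
      by move=> x y h; rewrite /bf; move: h; case: (x == a1); case: (y == a1).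
    have Hbf : balanced e bf.
      apply: (loop_dom (x0 := a1) (lam := L2)) => //.
        by rewrite /bf !eqxx.
      move=> v va.
      rewrite (beta_in_ext_v (g := beta)) ?(beta_out_ext_v (g := beta)) ?Hb //.
        by move=> u _; rewrite bf_v // va ?orbT.
      by move=> u _; rewrite bf_v // va ?orbT.
    have Hfail : exists w, ~ G_thr_strongly_connected e bf w.
      exists w0 => H'; apply: Hw0.
      have w0L2 : w0 <= L2.
        rewrite leNgt; apply/negP => hw.
        have Hna : forall x, nonisolated (thr_edge e beta w0) x -> x = a1.
          move=> x /existsP[t /orP[/andP[h1 h2]|/andP[h1 h2]]].
          - case: (boolP (nl t x)) => h; first by have := HL2 _ _ h1 h; rewrite leNgt (lt_le_trans hw h2).
            by move: h; rewrite /nl negbK => /andP[_ /eqP].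
          - case: (boolP (nl x t)) => h; first by have := HL2 _ _ h1 h; rewrite leNgt (lt_le_trans hw h2).
            by move: h; rewrite /nl negbK => /andP[/eqP].
        by move: u0v0; rewrite (Hna _ Nu0) (Hna _ Nv0) eqxx.
      have Heqr : thr_edge e bf w0 =2 thr_edge e beta w0.
        move=> x y; rewrite /thr_edge /bf; case: ifP => // /andP[/eqP-> /eqP->].
        by rewrite eaa w0L2 baa w0L1.
      move=> x y Nx Ny.
      have Hn : forall z, nonisolated (thr_edge e beta w0) z -> nonisolated (thr_edge e bf w0) z.
        by move=> z /existsP[t h]; apply/existsP; exists t; rewrite !Heqr.
      by rewrite -(eq_connect Heqr); exact: H' (Hn _ Nx) (Hn _ Ny).
    have Hsz : (size (vals e bf) < size (vals e beta))%N.
      apply: (vals_lt (r := L1)).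
      - move=> r; rewrite !mem_vals => /existsP[[x y] /andP[/= exy /eqP <-]].
        apply/existsP; rewrite /bf; case: ifP => h.
          by exists (a2, b2); rewrite /= eab2 eqxx.
        by exists (x, y); rewrite /= exy eqxx.
      - by rewrite mem_vals; apply/existsP; exists (a1, b1); rewrite /= eab1 eqxx.
      - rewrite mem_vals; apply/existsP => [[[x y] /andP[/= exy /eqP bfxy]]].
        by have := bf_le _ _ exy; rewrite bfxy leNgt L21.
    have [p [Hbp nc]] := IHm bf Hsz Hbf Hfail.
    exists p; split=> //.
    have Hle2 := bal_bound Hbp bf_le.
    apply: (loop_dom (x0 := a1) (lam := L1)) => //.
    - by rewrite /shift baa addrK.
    - move=> x y exy; case: (boolP ((x == a1) && (y == a1))) => [/andP[/eqP-> /eqP->]|h].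
        by rewrite /shift baa addrK.
      have := Hle2 _ _ exy; rewrite /shift bf_v; last by move: h; rewrite negb_and.
      move=> h'; apply: le_trans h' (ltW L21).
    - move=> v va.
      rewrite (beta_in_ext_v (g := shift bf p)) ?(beta_out_ext_v (g := shift bf p)) ?Hbp //.
        by move=> u _; rewrite /shift bf_v // va ?orbT.
      by move=> u _; rewrite /shift bf_v // va ?orbT.
-
  have [u1 [v1 [Nu1 Nv1 nc1]]] : exists u v, [/\ N1 u, N1 v & ~ connect H1 u v].
    apply: NNPP => H; apply: Hsc1 => u v Nu Nv; apply: NNPP => hn; apply: H.
    by exists u, v.
  have [k [Nk Hk]] := @ex_argminn V N1 (fun x => #|[set y | connect H1 y x]|) u1 Nu1.
  pose K := [set y | connect H1 y k].
  have kK : k \in K by rewrite inE connect0.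
  have KN1 : forall y, y \in K -> N1 y.
    move=> y; rewrite inE => /connectP[t Hp Hl]; case: t Hp Hl => [|z t] /= Hp Hl.
      by rewrite -Hl.
    by move: Hp => /andP[h _]; exact: (H1N _ _ h).1.
  have K3 : forall z y, H1 z y -> y \in K -> z \in K.
    by move=> z y h; rewrite !inE => yk; exact: connect_trans (connect1 h) yk.
  have K2 : forall y, y \in K -> connect H1 k y.
    move=> y yK.
    have sub : [set x | connect H1 x y] \subset [set x | connect H1 x k].
      apply/subsetP => x; rewrite !inE => xy; apply: connect_trans xy _; by rewrite inE in yK.
    have le := Hk y (KN1 y yK).
    have eqs : [set x | connect H1 x y] = [set x | connect H1 x k].
      by apply/eqP; rewrite eqEcard sub le.
    have : k \in [set x | connect H1 x k] by rewrite inE connect0.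
    by rewrite -eqs inE.
  have Kin : forall y, y \in K -> exists z, [/\ z \in K, e z y & beta z y = L1].
    move=> y yK; have [z [Nz ezy bzy]] := HN1in y (KN1 y yK).
    exists z; split=> //; apply: (K3 z y) yK; by rewrite /H1 /thr_edge ezy bzy lexx.
  have Kout : forall y, y \in K -> exists z, [/\ z \in K, e y z & beta y z = L1].
    move=> y yK; have [z0 [z0K ez0 bz0]] := Kin y yK.
    have Hz0 : H1 z0 y by rewrite /H1 /thr_edge ez0 bz0 lexx.
    have cyz : connect H1 y z0 by apply: connect_trans (K2 z0 z0K); rewrite inE in yK.
    move: cyz => /connectP[t Hp Hl]; case: t Hp Hl => [|y1 t] /= Hp Hl.
      by exists y; subst z0; have [e1 b1'] := H1eq _ _ Hz0; split.
    move: Hp => /andP[Hyy1 Hp]; have [e1 b1'] := H1eq _ _ Hyy1.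
    exists y1; split=> //; rewrite inE; have z0K' := z0K; rewrite inE in z0K'.
    by apply: connect_trans z0K'; apply/connectP; exists t.
  have [s0 [Ns0 s0K]] : exists s, N1 s /\ s \notin K.
    apply: NNPP => H; apply: nc1.
    have inK : forall x, N1 x -> x \in K.
      by move=> x Nx; apply: NNPP => xK; apply: H; exists x; split=> //; apply/negP.
    have := inK _ Nu1; rewrite inE => uk.
    exact: connect_trans uk (K2 _ (inK _ Nv1)).
  have [s [/andP[Ns sK] Hs]] := @ex_argminn V (fun x => N1 x && (x \notin K))
     (fun x => #|[set y | connect H1 x y]|) s0 (introT andP (conj Ns0 s0K)).
  pose S := [set y | connect H1 s y].
  have sS : s \in S by rewrite inE connect0.
  have SK : forall y, y \in S -> y \notin K.
    move=> y; rewrite !inE => sy; apply/negP => yk; move: sK; rewrite inE.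
    by rewrite (connect_trans sy yk).
  have SN1 : forall y, y \in S -> N1 y.
    move=> y; rewrite inE => /connectP[t Hp ->]; case/lastP: t Hp => [|t z] Hp //=.
    rewrite rcons_path in Hp; move: Hp => /andP[_ h]; rewrite last_rcons; exact: (H1N _ _ h).2.
  have S3 : forall y z, H1 y z -> y \in S -> z \in S.
    by move=> y z h; rewrite !inE => sy; exact: connect_trans sy (connect1 h).
  have S2 : forall y, y \in S -> connect H1 y s.
    move=> y yS.
    have sub : [set x | connect H1 y x] \subset [set x | connect H1 s x].
      apply/subsetP => x; rewrite !inE => xy; apply: connect_trans _ xy; by rewrite inE in yS.
    have le := Hs y; rewrite SN1 // SK // in le; have {}le := le isT.
    have eqs : [set x | connect H1 y x] = [set x | connect H1 s x].
      by apply/eqP; rewrite eqEcard sub le.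
    have : s \in [set x | connect H1 s x] by rewrite inE connect0.
    by rewrite -eqs inE.
  have Sout : forall y, y \in S -> exists z, [/\ z \in S, e y z & beta y z = L1].
    move=> y yS; have [z [Nz eyz byz]] := HN1out y (SN1 y yS).
    exists z; split=> //; apply: (S3 y z) yS; by rewrite /H1 /thr_edge eyz byz lexx.
  have Sin : forall y, y \in S -> exists z, [/\ z \in S, e z y & beta z y = L1].
    move=> y yS; have [z0 [z0S ez0 bz0]] := Sout y yS.
    have Hz0 : H1 y z0 by rewrite /H1 /thr_edge ez0 bz0 lexx.
    have cz0y : connect H1 z0 y by apply: connect_trans (S2 z0 z0S) _; rewrite inE in yS.
    move: cz0y => /connectP[t Hp Hl]; case/lastP: t Hp Hl => [|t y1] Hp Hl.
      by exists y; rewrite /= in Hl; subst z0; have [e1 b1'] := H1eq _ _ Hz0; split.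
    rewrite last_rcons in Hl; subst y1; rewrite rcons_path in Hp; move: Hp => /andP[Hp h].
    have [e1 b1'] := H1eq _ _ h.
    exists (last z0 t); split=> //; rewrite inE.
    have z0S' := z0S; rewrite inE in z0S'.
    by apply: connect_trans z0S' _; apply/connectP; exists t.
  have Hent : forall x y, e x y -> x \notin K -> y \in K -> beta x y < L1.
    move=> x y exy xK yK; rewrite lt_neqAle HL // andbT; apply/eqP => bxy.
    have h : H1 x y by rewrite /H1 /thr_edge exy bxy lexx.
    by move: xK; rewrite (K3 _ _ h yK).
  have [d [d0 Hd]] : exists d : R, 0 < d /\
      forall x y, e x y -> x \notin K -> y \in K -> beta x y + d <= L1.
    case: (boolP [exists pr : V * V, [&& e pr.1 pr.2, pr.1 \notin K & pr.2 \in K]]).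
    - move=> /existsP[pr0 P0].
      have [[xm ym] [/= /and3P[exm xmK ymK] Hm]] := @ex_argmax R _
        (fun pr : V * V => [&& e pr.1 pr.2, pr.1 \notin K & pr.2 \in K])
        (fun pr => beta pr.1 pr.2) pr0 P0.
      exists (L1 - beta xm ym); split; first by rewrite subr_gt0 Hent.
      move=> x y exy xK yK; have := Hm (x, y); rewrite /= exy xK yK => /(_ isT).
      move=> h; move: h; set A := beta x y; set B := beta xm ym; lra.
    - move=> /existsPn H; exists 1; split=> // x y exy xK yK.
      by have := H (x, y); rewrite /= exy xK yK.
  pose u := fun x : V => if x \in K then d else 0.
  pose bt := shift beta u.
  have bt_le : forall x y, e x y -> bt x y <= L1.
    move=> x y exy; rewrite /bt /shift /u.
    case xK: (x \in K); case yK: (y \in K).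
    - by rewrite addrK; exact: HL.
    - by rewrite addr0 lerBlDr; apply: le_trans (HL _ _ exy) _; rewrite lerDl ltW.
    - by rewrite subr0; apply: Hd => //; rewrite xK.
    - by rewrite addr0 subr0; exact: HL.
  pose C := S :|: K.
  have kC : k \in C by rewrite inE kK orbT.
  have sC : s \in C by rewrite inE sS.
  have sk : s != k by apply/eqP => sk; move: sK; rewrite sk kK.
  have bt_same : forall x y, (x \in K) = (y \in K) -> bt x y = beta x y.
    by move=> x y h; rewrite /bt /shift /u h addrK.
  have HCin : forall x, x \in C -> exists y, [/\ y \in C, e y x & bt y x = L1].
    move=> x; rewrite inE => /orP[xS|xK].
    - have [y [yS eyx byx]] := Sin x xS; exists y; rewrite inE yS bt_same //.
      by rewrite (negbTE (SK _ yS)) (negbTE (SK _ xS)).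
    - have [y [yK eyx byx]] := Kin x xK; exists y; rewrite inE yK orbT bt_same //.
      by rewrite yK xK.
  have HCout : forall x, x \in C -> exists y, [/\ y \in C, e x y & bt x y = L1].
    move=> x; rewrite inE => /orP[xS|xK].
    - have [y [yS eyx byx]] := Sout x xS; exists y; rewrite inE yS bt_same //.
      by rewrite (negbTE (SK _ yS)) (negbTE (SK _ xS)).
    - have [y [yK eyx byx]] := Kout x xK; exists y; rewrite inE yK orbT bt_same //.
      by rewrite yK xK.
  have [p' Hbal'] := @exist_bal R (Vc C k) (@ec V e C k) (@bc R V e bt C k) (sc_ec Hsc).
  have Hle' := bal_bound Hbal' (@bc_le R V e bt C k L1 bt_le).
  have Hl := lift_balanced kC HCin HCout Hle' Hbal'.
  pose P := fun x => u x + p' (pic C k x).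
  exists P; split.
    by apply: balanced_ext Hl => x y _; rewrite /P /bt /shift; ring.
  apply: NNPP => H.
  have Hc : forall x y, e x y -> P x = P y.
    move=> x y exy; apply/eqP; apply: NNPP => hn; apply: H; exists x, y; split=> //.
    by apply/negP.
  have := connect_const Hc (Hsc s k isT isT).
  rewrite /P /u (negbTE sK) kK (pic_in k sC) (pic_in k kC) add0r.
  move: d0; set A := p' _; lra.
Qed.

End NonUniq.

Section Final.
Variable R : realFieldType.

Lemma nonuniq_dir (V : finType) (e : rel V) (beta : V -> V -> R) :
  strongly_connected e -> balanced e beta ->
  (exists w, ~ G_thr_strongly_connected e beta w) -> NUconcl e beta.
Proof.
suff H : forall n m (V : finType) (e : rel V) (beta : V -> V -> R),
    (#|V| <= n)%N -> (size (vals e beta) <= m)%N -> strongly_connected e -> balanced e beta ->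
    (exists w, ~ G_thr_strongly_connected e beta w) -> NUconcl e beta.
  by apply: (H #|V| (size (vals e beta))).
elim=> [|n IHn] m; elim: m => [|m IHm] V' e' beta' Hn Hm Hsc;
  apply: nonuniq_step => // [V2 e2 b2 HV2 Hsc2|b2 HE2].
- by move: HV2; rewrite ltnNge (leq_trans Hn (leq0n _)).
- by move: HE2; rewrite ltnNge (leq_trans Hm (leq0n _)).
- by move: HV2; rewrite ltnNge (leq_trans Hn (leq0n _)).
- apply: (IHm V' e' b2) => //; by rewrite -ltnS (leq_trans HE2 Hm).
- by apply: (IHn (size (vals e2 b2)) V2 e2 b2) => //; rewrite -ltnS (leq_trans HV2 Hn).
- by move: HE2; rewrite ltnNge (leq_trans Hm (leq0n _)).
- by apply: (IHn (size (vals e2 b2)) V2 e2 b2) => //; rewrite -ltnS (leq_trans HV2 Hn).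
- apply: (IHm V' e' b2) => //; by rewrite -ltnS (leq_trans HE2 Hm).
Qed.

End Final.

Theorem theorem1 (V : finType) (R : realFieldType) (e : rel V)
  (beta : V -> V -> R) :
  strongly_connected e -> balanced e beta ->
  (unique_balanced_in_class e beta <->
   forall w : R, G_thr_strongly_connected e beta w).
Proof.
move=> Hsc Hb; split; last exact: uniq_dir.
move=> Hu w; apply: NNPP => Hw.
have [p [Hbp [x [y [exy pxy]]]]] := nonuniq_dir Hsc Hb (ex_intro _ w Hw).
have := Hu _ Hbp (equiv_shift (e := e) beta p) x y exy.
rewrite /shift => /eqP; rewrite -addrA addrC -subr_eq0 addrK subr_eq0 eq_sym => /eqP pe.
by move: pxy; rewrite pe eqxx.
Qed.
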